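(* Let $L>0$, $D>0$, $\alpha\in[0,1]$, $\tau_{\rm acc}>0$, $\tau_{\rm m}>0$, $h_{\rm m}>0$, $\bar h_{\rm acc}>0$, and let $\tau_{\rm mix}$, $\bar h_{\rm mix}$, $\bar\rho$, $\bar v$ and $c_1,c_2,c_3,c_4$ be as defined in the context (with $\bar\rho,\bar v>0$). Consider, for $x\in[0,D]$, $t\ge0$, the open-loop system (i.e. with $\tilde h_{\rm acc}\equiv 0$) $$\tilde z_t(x,t)+\bar v\,\tilde z_x(x,t)=0,\qquad \tilde v_t(x,t)-c_4\tilde v_x(x,t)=-c_1e^{-\frac{c_2x}{\bar v}}\tilde z(x,t),$$ $$\tilde z(0,t)=-L\frac{\bar\rho^2}{\bar v}\tilde v(0,t),\qquad \tilde v_t(D,t)=-c_1e^{-\frac{c_2D}{\bar v}}\tilde z(D,t).$$ This system is exponentially unstable: there exist a real number $\sigma>0$ and a nontrivial pair of functions $(\phi,\psi)$ on $[0,D]$ such that $\tilde z(x,t)=e^{\sigma t}\phi(x)$, $\tilde v(x,t)=e^{\sigma t}\psi(x)$ is a solution.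
   Context: Definitions: $\tau_{\rm mix}=\left(\frac{\alpha}{\tau_{\rm acc}}+\frac{1-\alpha}{\tau_{\rm m}}\right)^{-1}$; $\bar h_{\rm mix}=\frac{\alpha+(1-\alpha)\frac{\tau_{\rm acc}}{\tau_{\rm m}}}{\alpha+(1-\alpha)\frac{\tau_{\rm acc}}{\tau_{\rm m}}\frac{\bar h_{\rm acc}}{h_{\rm m}}}\bar h_{\rm acc}$. Given a constant inflow $q_{\rm in}>0$ with $q_{\rm in}\bar h_{\rm mix}<1$, the equilibrium values are $\bar v=\frac{L}{\frac{1}{q_{\rm in}}-\bar h_{\rm mix}}$ and $\bar\rho=\frac{q_{\rm in}}{\bar v}$, so that $\bar v=q_{\rm in}/\bar\rho$ and $\frac1{\bar\rho}-L=\bar h_{\rm mix}\bar v$. Constants: $c_1=\frac{1}{\bar\rho^2\tau_{\rm mix}\bar h_{\rm mix}}$, $c_2=\frac{1}{\tau_{\rm mix}}$, $c_3=\frac{\alpha}{\tau_{\rm acc}\bar h_{\rm acc}^2}\left(\frac1{\bar\rho}-L\right)$, $c_4=\frac{L}{\bar h_{\rm mix}}$. (This system is the diagonalized linearization, around a uniform congested equilibrium, of an Aw–Rascle–Zhang-type traffic model in which $\tilde h_{\rm acc}$ is the deviation of the time-gap of ACC-equipped vehicles; $\tilde z=e^{c_2x/\bar v}(\tilde\rho+\bar h_{\rm mix}\bar\rho^2\tilde v)$.) *)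

(* Defs.v *)
From Stdlib Require Import Reals.
From Coquelicot Require Import Coquelicot.
Open Scope R_scope.

Definition tau_mix (alpha tau_acc tau_m : R) : R :=
  / (alpha / tau_acc + (1 - alpha) / tau_m).

Definition h_mix (alpha tau_acc tau_m h_m h_acc : R) : R :=
  (alpha + (1 - alpha) * (tau_acc / tau_m))
  / (alpha + (1 - alpha) * (tau_acc / tau_m) * (h_acc / h_m)) * h_acc.

Definition v_bar (L q_in hmix : R) : R := L / (/ q_in - hmix).
Definition rho_bar (L q_in hmix : R) : R := q_in / v_bar L q_in hmix.

Definition cst1 (rho tmix hmix : R) : R := / (rho ^ 2 * tmix * hmix).
Definition cst2 (tmix : R) : R := / tmix.
Definition cst3 (alpha tau_acc h_acc rho L : R) : R :=
  alpha / (tau_acc * h_acc ^ 2) * (/ rho - L).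
Definition cst4 (L hmix : R) : R := L / hmix.

(* Main.v *)
Require Import Defs.
From Stdlib Require Import Reals Lra Psatz.
From Coquelicot Require Import Coquelicot.
Open Scope R_scope.

Lemma core (D vb k1 k2 k4 c : R) (HD : 0 < D) (Hvb : 0 < vb) (Hk1 : 0 < k1)
  (Hk2 : 0 < k2) (Hk4 : 0 < k4) (Hc : 0 < c) :
  exists (sigma : R) (phi psi : R -> R),
    0 < sigma /\
    (exists x, 0 <= x <= D /\ (phi x <> 0 \/ psi x <> 0)) /\
    let z := fun x t => exp (sigma * t) * phi x in
    let v := fun x t => exp (sigma * t) * psi x in
    (forall x t, 0 <= x <= D -> 0 <= t ->
       ex_derive (fun s => z x s) t /\ ex_derive (fun y => z y t) x /\
       ex_derive (fun s => v x s) t /\ ex_derive (fun y => v y t) x /\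
       Derive (fun s => z x s) t + vb * Derive (fun y => z y t) x = 0 /\
       Derive (fun s => v x s) t - k4 * Derive (fun y => v y t) x
         = - k1 * exp (- (k2 * x / vb)) * z x t) /\
    (forall t, 0 <= t ->
       z 0 t = - c * v 0 t /\
       Derive (fun s => v D s) t = - k1 * exp (- (k2 * D / vb)) * z D t).
Proof.
  set (KK := k1 * c).
  assert (HK : 0 < KK) by (unfold KK; nra).
  set (G := fun s => s * (s + k4 * ((s + k2) / vb) - KK)
                    - KK * (k4 * ((s + k2) / vb)) * exp (- ((s + k2) / vb + s / k4) * D)).
  set (S := KK + KK * (k4 * / vb) + k2 + 1).
  assert (HM : 0 < KK * (k4 * / vb)) by
     (apply Rmult_lt_0_compat; [lra| apply Rmult_lt_0_compat; [lra| apply Rinv_0_lt_compat; lra]]).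
  assert (HS : 0 < S) by (unfold S; lra).
  assert (G0 : G 0 < 0).
  { unfold G. assert (0 < exp (- ((0 + k2) / vb + 0 / k4) * D)) by apply exp_pos.
    assert (0 < (0 + k2) / vb) by (apply Rdiv_lt_0_compat; lra).
    assert (0 < KK * (k4 * ((0 + k2) / vb))) by (apply Rmult_lt_0_compat; [lra|nra]).
    nra. }
  assert (GS : 0 < G S).
  { unfold G.
    assert (He : exp (- ((S + k2) / vb + S / k4) * D) <= 1).
    { rewrite <- exp_0. apply Rlt_le, exp_increasing.
      assert (0 < (S + k2) / vb) by (apply Rdiv_lt_0_compat; lra).
      assert (0 < S / k4) by (apply Rdiv_lt_0_compat; lra).
      nra. }
    assert (He0 : 0 < exp (- ((S + k2) / vb + S / k4) * D)) by apply exp_pos.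
    assert (Ha : 0 <= k4 * ((S + k2) / vb)).
    { apply Rlt_le, Rmult_lt_0_compat; [lra| apply Rdiv_lt_0_compat; lra]. }
    assert (Eq : KK * (k4 * ((S + k2) / vb)) = KK * (k4 * / vb) * (S + k2))
      by (unfold Rdiv; ring).
    rewrite Eq.
    set (M := KK * (k4 * / vb)) in *.
    assert (S * (S - KK - M) = S * (k2 + 1)) by (unfold S; ring).
    assert (HMS : 0 <= M * (S + k2)) by nra.
    pose proof (Rmult_le_compat_l _ _ _ HMS He).
    assert (S * (k4 * ((S + k2) / vb)) >= 0) by nra.
    assert (S * (k2 + 1) > M * k2).
    { assert (S > M) by (unfold S; lra). nra. }
    nra. }
  assert (Gc : continuity G).
  { intro x. apply continuity_pt_filterlim. apply (@ex_derive_continuous R_AbsRing R_NormedModule).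
    unfold G. auto_derive. repeat split; lra. }
  destruct (IVT G 0 S Gc HS G0 GS) as [sg [[Hs0 Hs1] Hsg]].
  assert (Hsp : 0 < sg).
  { destruct Hs0 as [H|H]; [exact H|]. subst sg. lra. }
  clear Hs0.
  set (a := (sg + k2) / vb).
  set (b := sg / k4).
  assert (Ha : 0 < a) by (apply Rdiv_lt_0_compat; lra).
  assert (Hb : 0 < b) by (apply Rdiv_lt_0_compat; lra).
  set (B := a * exp (- (a + b) * D) / b).
  set (A := - (sg + k4 * a) / k1).
  assert (HB : 0 < B).
  { unfold B. apply Rdiv_lt_0_compat; [|lra]. apply Rmult_lt_0_compat; [lra|apply exp_pos]. }
  exists sg, (fun x => A * exp (- (sg / vb) * x)),
    (fun x => B * exp (b * x) + exp (- a * x)).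
  split; [exact Hsp|]. split.
  { exists D. split; [lra|]. right.
    assert (0 < exp (b * D)) by apply exp_pos.
    assert (0 < exp (- a * D)) by apply exp_pos. nra. }
  assert (Hk4b : k4 * b = sg) by (unfold b; field; lra).
  assert (HA : k1 * A = - (sg + k4 * a)) by (unfold A; field; lra).
  assert (Ha2 : forall y, exp (- (k2 * y / vb)) * exp (- (sg / vb) * y) = exp (- a * y)).
  { intro y. rewrite <- exp_plus. f_equal. unfold a. field. lra. }
  assert (HBb : forall y, B * exp (b * y) = a / b * exp (- (a + b) * D) * exp (b * y)).
  { intro y. unfold B. field. lra. }
  intros z v. split.
  - intros x t Hx Ht. unfold z, v.
    assert (D1 : is_derive (fun s => exp (sg * s) * (A * exp (- (sg / vb) * x))) t
                   (sg * exp (sg * t) * (A * exp (- (sg / vb) * x)))).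
    { auto_derive; [trivial| ring]. }
    assert (E1 : Derive (fun s => exp (sg * s) * (A * exp (- (sg / vb) * x))) t = (sg * exp (sg * t) * (A * exp (- (sg / vb) * x)))) by (apply is_derive_unique; exact D1).
    assert (D2 : is_derive (fun y => exp (sg * t) * (A * exp (- (sg / vb) * y))) x
                   (exp (sg * t) * (A * (- (sg / vb)) * exp (- (sg / vb) * x)))).
    { auto_derive; [trivial| ring]. }
    assert (E2 : Derive (fun y => exp (sg * t) * (A * exp (- (sg / vb) * y))) x = (exp (sg * t) * (A * (- (sg / vb)) * exp (- (sg / vb) * x)))) by (apply is_derive_unique; exact D2).
    assert (D3 : is_derive (fun s => exp (sg * s) * (B * exp (b * x) + exp (- a * x))) t
                   (sg * exp (sg * t) * (B * exp (b * x) + exp (- a * x)))).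
    { auto_derive; [trivial| ring]. }
    assert (E3 : Derive (fun s => exp (sg * s) * (B * exp (b * x) + exp (- a * x))) t = (sg * exp (sg * t) * (B * exp (b * x) + exp (- a * x)))) by (apply is_derive_unique; exact D3).
    assert (D4 : is_derive (fun y => exp (sg * t) * (B * exp (b * y) + exp (- a * y))) x
                   (exp (sg * t) * (B * b * exp (b * x) + (- a) * exp (- a * x)))).
    { auto_derive; [trivial| ring]. }
    assert (E4 : Derive (fun y => exp (sg * t) * (B * exp (b * y) + exp (- a * y))) x = (exp (sg * t) * (B * b * exp (b * x) + (- a) * exp (- a * x)))) by (apply is_derive_unique; exact D4).
    repeat split; try (eexists; eassumption).
    + rewrite E1, E2. field. lra.
    + rewrite E3, E4.
      replace (- k1 * exp (- (k2 * x / vb)) * (exp (sg * t) * (A * exp (- (sg / vb) * x))))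
        with (- (k1 * A) * exp (sg * t) * (exp (- (k2 * x / vb)) * exp (- (sg / vb) * x))) by ring.
      rewrite Ha2, HA. rewrite <- Hk4b. ring.
  - intros t Ht. unfold z, v. split.
    + rewrite !Rmult_0_r, exp_0.
      assert (HG : sg + k4 * a = KK * (1 + B)).
      { unfold G in Hsg. fold a b in Hsg.
        assert (Hid : KK * (k4 * a) * exp (- (a + b) * D) = sg * (KK * B)).
        { rewrite <- Hk4b. unfold B. field. lra. }
        apply Rmult_eq_reg_l with sg; [|lra]. nra. }
      assert (A = - c * (1 + B)).
      { apply Rmult_eq_reg_l with k1; [|lra]. rewrite HA, HG. unfold KK. ring. }
      rewrite H. ring.
    + assert (D3 : is_derive (fun s => exp (sg * s) * (B * exp (b * D) + exp (- a * D))) t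
                   (sg * exp (sg * t) * (B * exp (b * D) + exp (- a * D)))).
      { auto_derive; [trivial| ring]. }
 assert (E3 : Derive (fun s => exp (sg * s) * (B * exp (b * D) + exp (- a * D))) t = (sg * exp (sg * t) * (B * exp (b * D) + exp (- a * D)))) by (apply is_derive_unique; exact D3).
      rewrite E3.
      replace (- k1 * exp (- (k2 * D / vb)) * (exp (sg * t) * (A * exp (- (sg / vb) * D))))
        with (- (k1 * A) * exp (sg * t) * (exp (- (k2 * D / vb)) * exp (- (sg / vb) * D))) by ring.
      rewrite Ha2, HA, HBb.
      assert (Hm : exp (- (a + b) * D) * exp (b * D) = exp (- a * D)).
      { rewrite <- exp_plus. f_equal. ring. }
      replace (a / b * exp (- (a + b) * D) * exp (b * D)) with
        (a / b * (exp (- (a + b) * D) * exp (b * D))) by ring.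
      rewrite Hm. rewrite <- Hk4b. field. lra.
Qed.

Theorem proposition1
  (L D alpha tau_acc tau_m h_m h_acc q_in : R)
  (HL : 0 < L) (HD : 0 < D) (Ha0 : 0 <= alpha) (Ha1 : alpha <= 1)
  (Htacc : 0 < tau_acc) (Htm : 0 < tau_m) (Hhm : 0 < h_m) (Hhacc : 0 < h_acc)
  (Hq : 0 < q_in)
  (Hqh : q_in * h_mix alpha tau_acc tau_m h_m h_acc < 1) :
  let tmix := tau_mix alpha tau_acc tau_m in
  let hmix := h_mix alpha tau_acc tau_m h_m h_acc in
  let vb := v_bar L q_in hmix in
  let rb := rho_bar L q_in hmix in
  let k1 := cst1 rb tmix hmix in
  let k2 := cst2 tmix in
  let k4 := cst4 L hmix in
  exists (sigma : R) (phi psi : R -> R),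
    0 < sigma /\
    (exists x, 0 <= x <= D /\ (phi x <> 0 \/ psi x <> 0)) /\
    let z := fun x t => exp (sigma * t) * phi x in
    let v := fun x t => exp (sigma * t) * psi x in
    (* the PDEs hold on [0,D] x [0,oo) in the classical sense *)
    (forall x t, 0 <= x <= D -> 0 <= t ->
       ex_derive (fun s => z x s) t /\ ex_derive (fun y => z y t) x /\
       ex_derive (fun s => v x s) t /\ ex_derive (fun y => v y t) x /\
       Derive (fun s => z x s) t + vb * Derive (fun y => z y t) x = 0 /\
       Derive (fun s => v x s) t - k4 * Derive (fun y => v y t) x
         = - k1 * exp (- (k2 * x / vb)) * z x t) /\
    (* boundary conditions *)
    (forall t, 0 <= t ->
       z 0 t = - L * (rb ^ 2 / vb) * v 0 t /\
       Derive (fun s => v D s) t = - k1 * exp (- (k2 * D / vb)) * z D t).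
Proof.
  intros tmix hmix vb rb k1 k2 k4.
  assert (Hr : 0 < tau_acc / tau_m) by (apply Rdiv_lt_0_compat; lra).
  assert (Hs : 0 < h_acc / h_m) by (apply Rdiv_lt_0_compat; lra).
  assert (Hhmix : 0 < hmix).
  { unfold hmix, h_mix.
    assert (0 < alpha + (1 - alpha) * (tau_acc / tau_m)).
    { assert (0 <= (1 - alpha) * (tau_acc / tau_m)) by (apply Rmult_le_pos; lra).
      destruct Ha0 as [Hp|He]; [lra| rewrite <- He; lra]. }
    assert (0 < alpha + (1 - alpha) * (tau_acc / tau_m) * (h_acc / h_m)).
    { assert (0 < tau_acc / tau_m * (h_acc / h_m)) by nra. rewrite Rmult_assoc.
      assert (0 <= (1 - alpha) * (tau_acc / tau_m * (h_acc / h_m))) by (apply Rmult_le_pos; lra).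
      destruct Ha0 as [Hp|He]; [lra| rewrite <- He; lra]. }
    apply Rmult_lt_0_compat; [apply Rdiv_lt_0_compat|]; lra. }
  assert (Htmix : 0 < tmix).
  { unfold tmix, tau_mix. apply Rinv_0_lt_compat.
    assert (0 < / tau_acc) by (apply Rinv_0_lt_compat; lra).
    assert (0 < / tau_m) by (apply Rinv_0_lt_compat; lra).
    unfold Rdiv. nra. }
  assert (Hvb : 0 < vb).
  { unfold vb, v_bar. apply Rdiv_lt_0_compat; [lra|].
    fold hmix in Hqh.
    assert (/ q_in - hmix = (1 - q_in * hmix) / q_in) by (field; lra).
    rewrite H. apply Rdiv_lt_0_compat; lra. }
  assert (Hrb : 0 < rb) by (unfold rb, rho_bar; fold vb; apply Rdiv_lt_0_compat; lra).
  assert (Hk1 : 0 < k1).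
  { unfold k1, cst1. apply Rinv_0_lt_compat.
    apply Rmult_lt_0_compat; [apply Rmult_lt_0_compat|]; [apply pow_lt|..]; lra. }
  assert (Hk2 : 0 < k2) by (unfold k2, cst2; apply Rinv_0_lt_compat; lra).
  assert (Hk4 : 0 < k4) by (unfold k4, cst4; apply Rdiv_lt_0_compat; lra).
  assert (Hc : 0 < L * (rb ^ 2 / vb)).
  { apply Rmult_lt_0_compat; [lra|apply Rdiv_lt_0_compat; [apply pow_lt|]; lra]. }
  destruct (core D vb k1 k2 k4 (L * (rb ^ 2 / vb)) HD Hvb Hk1 Hk2 Hk4 Hc)
    as [sg [phi [psi [H1 [H2 H3]]]]].
  exists sg, phi, psi. split; [exact H1|]. split; [exact H2|].
  destruct H3 as [H3 H4]. split; [exact H3|].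
  intros t Ht. destruct (H4 t Ht) as [H5 H6]. split; [|exact H6].
  rewrite H5. ring.
Qed.
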